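(* Let $V$ be a finite set, $\mathcal{F}\subseteq 2^V$ a minimal hereditary family with $\delta(\mathcal{F})\ge 12$, and $x\in V$ with $f_3(x)=1$ and $f_1(x)=4$. Write $\mathcal{Q}(x)=\{Q\}$ with $Q=\{x,y_1,y_2,y_3\}$ and $N(x)=\{x,y_1,y_2,y_3,z\}$. Then: (1) $\mathcal{F}(x)=2^{\{y_1,y_2,y_3\}}\cup\{\{z\}\}\cup\{\{y_i,z\}: i\in[3]\}$; in particular $N(x)\subseteq N(z)$ and $N(x)\subseteq N(y_i)$ for all $i\in[3]$; (2) $c(Q)=0$; (3) $u(x)=5.3$.
   Context: Let $V$ be a finite set. A family $\mathcal{F}\subseteq 2^V$ is hereditary if $F'\subseteq F\in\mathcal{F}$ implies $F'\in\mathcal{F}$. For $x\in V$: the link is $\mathcal{F}(x)=\{F\setminus\{x\}: x\in F\in\mathcal{F}\}$, $d_{\mathcal{F}}(x)=|\mathcal{F}(x)|$, $\delta(\mathcal{F})=\min_{x\in V}d_{\mathcal{F}}(x)$, and the neighborhood is $N(x)=\bigcup_{x\in F\in\mathcal{F}}F$. For $A\subseteq V$, $d_{\mathcal{F}}(A)=|\{F\in\mathcal{F}: A\subseteq F\}|$. A set $F\in\mathcal{F}$ is maximal if no other member strictly contains it; a hereditary $\mathcal{F}$ with $\delta(\mathcal{F})\ge 12$ is minimal if $\delta(\mathcal{F}\setminus\{F\})\le 11$ for every maximal $F\in\mathcal{F}$. $f_i(x)$ denotes the number of $i$-element sets in $\mathcal{F}(x)$. A vertex $x$ is mini-weight if $f_1(x)=4$,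 $f_2(x)=5$, $f_3(x)=2$. $\mathcal{Q}=\{Q\in\mathcal{F}:|Q|=4\}$, $\mathcal{Q}(x)=\{Q\in\mathcal{Q}: x\in Q\}$, and for $Q\in\mathcal{Q}$, $c(Q)$ is the number of mini-weight vertices in $Q$. Weights: for $x\in F\in\mathcal{F}$ define $\omega(x,F)$ as follows. If $|F|\ne 3$, $\omega(x,F)=1/|F|$. If $|F|=3$: if $F$ is contained in some 4-element member of $\mathcal{F}$, every element of $F$ gets $\omega=1/3$; otherwise order the three 2-subsets of $F$ as $e_1,e_2,e_3$ with $d_{\mathcal{F}}(e_1)\le d_{\mathcal{F}}(e_2)\le d_{\mathcal{F}}(e_3)$; if $d_{\mathcal{F}}(e_2)\le 4<d_{\mathcal{F}}(e_3)$, the two elements of $e_3$ get $\omega=7/20$ and the element of $F\setminus e_3$ gets $6/20$; else if $d_{\mathcal{F}}(e_1)\le 4<d_{\mathcal{F}}(e_2)$, the two elements of $e_1$ get $7/20$ and the element of $F\setminus e_1$ gets $6/20$; otherwise every element of $F$ gets $1/3$. The weight of $x$ is $u(x)=\sum_{x\in F\in\mathcal{F}}\omega(x,F)$. *)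

(* Defs.v *)
From HB Require Import structures.
From mathcomp Require Import all_boot all_order all_algebra.
Set Implicit Arguments. Unset Strict Implicit. Unset Printing Implicit Defensive.
Import Order.TTheory GRing.Theory Num.Theory.

Section Defs.
Variable T : finType.
Implicit Types (F : {set {set T}}) (A B : {set T}) (x : T).

Definition hereditary F : Prop :=
  forall A B, A \in F -> B \subset A -> B \in F.

Definition link F x : {set {set T}} := [set A :\ x | A in [set B in F | x \in B]].

Definition deg F x : nat := #|link F x|.

Definition min_deg_ge F k : Prop := forall x, k <= deg F x.

Definition nbhd F x : {set T} := \bigcup_(A in F | x \in A) A.

Definition degS F A : nat := #|[set B in F | A \subset B]|.

Definition is_maximal F A : Prop :=
  A \in F /\ forall B, B \in F -> A \subset B -> B = A.

Definition minimal12 F : Prop :=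
  [/\ hereditary F, min_deg_ge F 12 &
      forall M, is_maximal F M -> exists v, deg (F :\ M) v <= 11].

Definition fi F i x : nat := #|[set A in link F x | #|A| == i]|.

Definition mini_weight F x : bool :=
  [&& fi F 1 x == 4, fi F 2 x == 5 & fi F 3 x == 2].

Definition Qs F : {set {set T}} := [set A in F | #|A| == 4].
Definition Qx F x : {set {set T}} := [set A in Qs F | x \in A].
Definition cQ F (Q : {set T}) : nat := #|[set v in Q | mini_weight F v]|.

Local Open Scope ring_scope.

Definition n_big F A : nat := #|[set e : {set T} | (e \subset A) && (#|e| == 2)%N && (4 < degS F e)%N]|.

Definition omega F x A : rat :=
  if #|A| != 3%N then (#|A|%:R)^-1
  else if [exists B in F, (A \subset B) && (#|B| == 4%N)] then 1/3
  else if n_big F A == 1%N then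
    (* d(e2) <= 4 < d(e3): elements of e3 (the unique 2-subset with d > 4) get 7/20 *)
    (if [exists e : {set T}, [&& e \subset A, #|e| == 2%N, (4 < degS F e)%N & x \in e]]
     then 7/20 else 6/20)
  else if n_big F A == 2%N then
    (* d(e1) <= 4 < d(e2): elements of e1 (the unique 2-subset with d <= 4) get 7/20 *)
    (if [exists e : {set T}, [&& e \subset A, #|e| == 2%N, (degS F e <= 4)%N & x \in e]]
     then 7/20 else 6/20)
  else 1/3.

Definition weight F x : rat := \sum_(A in F | x \in A) omega F x A.

End Defs.

(* Main.v *)
Require Import Defs.
From HB Require Import structures.
From mathcomp Require Import all_boot all_order all_algebra.
Import Order.TTheory GRing.Theory Num.Theory.
Set Implicit Arguments. Unset Strict Implicit.

Section Gen.
Variable T : finType.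

Lemma Dfacts (x a b c z : T) : uniq [:: x; a; b; c; z] ->
  ((x == a) = false) * ((a == x) = false) * ((x == b) = false) * ((b == x) = false) *
  ((x == c) = false) * ((c == x) = false) * ((x == z) = false) * ((z == x) = false) *
  ((a == b) = false) * ((b == a) = false) * ((a == c) = false) * ((c == a) = false) *
  ((a == z) = false) * ((z == a) = false) * ((b == c) = false) * ((c == b) = false) *
  ((b == z) = false) * ((z == b) = false) * ((c == z) = false) * ((z == c) = false).
Proof.
rewrite /= !inE !negb_or => /and5P [/and4P [xa xb xc xz] /and3P [ab ac az] /andP [bc bz] cz _].
by repeat split; apply/negbTE; first [done | rewrite eq_sym; done].
Qed.

Lemma sub3_enum (p q r : T) (B : {set T}) : B \subset [set p; q; r] ->
  B = (if p \in B then [set p] else set0) :|: (if q \in B then [set q] else set0)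
      :|: (if r \in B then [set r] else set0).
Proof.
move=> sB; apply/setP => w; case Hp: (p \in B); case Hq: (q \in B); case Hr: (r \in B); rewrite !inE;
(case Hw: (w \in B) => /=; [ have := subsetP sB w Hw; rewrite !inE -?orbA => /or3P [] /eqP E; subst w;
   first [by rewrite eqxx ?orbT | by rewrite Hp in Hw | by rewrite Hq in Hw | by rewrite Hr in Hw] | apply/esym/negbTE; rewrite ?negb_or ?andbT //; repeat (apply/andP; split);
   apply/negP => /eqP E; subst w; first [by rewrite Hp in Hw | by rewrite Hq in Hw | by rewrite Hr in Hw]]).
Qed.

Lemma sub4_enum (p q r s : T) (B : {set T}) : B \subset [set p; q; r; s] ->
  B = (if p \in B then [set p] else set0) :|: (if q \in B then [set q] else set0)
      :|: (if r \in B then [set r] else set0) :|: (if s \in B then [set s] else set0).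
Proof.
move=> sB; apply/setP => w; case Hp: (p \in B); case Hq: (q \in B); case Hr: (r \in B); case Hs: (s \in B); rewrite !inE;
(case Hw: (w \in B) => /=; [ have := subsetP sB w Hw; rewrite !inE -?orbA => /or4P [] /eqP E; subst w;
   first [by rewrite eqxx ?orbT | by rewrite Hp in Hw | by rewrite Hq in Hw | by rewrite Hr in Hw | by rewrite Hs in Hw] | apply/esym/negbTE; rewrite ?negb_or ?andbT //; repeat (apply/andP; split);
   apply/negP => /eqP E; subst w; first [by rewrite Hp in Hw | by rewrite Hq in Hw | by rewrite Hr in Hw | by rewrite Hs in Hw]]).
Qed.

Lemma card1_eq (U : finType) (S : {set U}) a b : #|S| = 1 -> a \in S -> b \in S -> a = b.
Proof.
move=> h ha hb; have : #|S| <= 1 by rewrite h.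
by move/card_le1_eqP => /(_ a b ha hb).
Qed.

End Gen.

Section Main.
Variable T : finType.
Variable F : {set {set T}}.
Hypothesis Hher : hereditary F.

Lemma linkP v B : (B \in link F v) = (v \notin B) && (v |: B \in F).
Proof.
apply/imsetP/andP => [[A] | [vB FB]].
- rewrite inE => /andP [FA vA] ->. by rewrite setD11 setD1K.
- exists (v |: B); first by rewrite inE FB setU11.
  by rewrite setU1K.
Qed.

Lemma link_her v (B C : {set T}) : B \in link F v -> C \subset B -> C \in link F v.
Proof.
rewrite !linkP => /andP [vB FB] CB.
rewrite (contra (fun h => subsetP CB v h)) //=.
apply: Hher FB _. by rewrite setUS.
Qed.

Lemma in_nbhd v A w : A \in F -> v \in A -> w \in A -> w \in nbhd F v.
Proof. move=> FA vA wA; apply/bigcupP; exists A => //; by rewrite FA vA. Qed.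


Definition L12 (a b c z : T) : {set {set T}} :=
  [set set0; [set a]; [set b]; [set c]; [set z]; [set a; b]; [set a; c]; [set b; c];
       [set a; z]; [set b; z]; [set c; z]; [set a; b; c]].

Ltac sa D := rewrite ?set0U ?setU0 ?inE ?eqEsubset ?subUset ?sub1set ?sub0set ?inE ?eqxx ?D ?orbF //=.

Section Perm.
Variables x a b c z : T.
Hypothesis Hu : uniq [:: x; a; b; c; z].
Hypothesis HQ : Qx F x = [set [set x; a; b; c]].
Hypothesis HL : link F x = L12 a b c z.

Let D := Dfacts Hu.

Lemma inF B : B \in L12 a b c z -> x |: B \in F.
Proof. by rewrite -HL linkP => /andP []. Qed.

Lemma QinF4 C : C \in F -> #|C| = 4 -> x \in C -> C = [set x; a; b; c].
Proof.
move=> CF C4 xC; have : C \in Qx F x by rewrite !inE CF C4 eqxx xC.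
by rewrite HQ inE => /eqP.
Qed.

Lemma QF : [set x; a; b; c] \in F.
Proof.
have -> : [set x; a; b; c] = x |: [set a; b; c] by rewrite !setUA.
apply: (inF (B := [set a; b; c])); by rewrite /L12 !inE eqxx ?orbT.
Qed.

Lemma omega_xaz : omega F x (x |: [set a; z]) = (7 / 20)%R.
Proof.
rewrite /omega.
have c3 : #|(x |: [set a; z])| = 3 by rewrite !cardsU1 cards1 !inE !D.
rewrite c3 eqxx /=.
have -> : [exists B in F, ((x |: [set a; z]) \subset B) && (#|B| == 4)] = false.
  apply/negbTE/existsP => [[C /andP [CF /andP [sC /eqP C4]]]].
  have xC : x \in C by apply: (subsetP sC); rewrite !inE eqxx.
  have zC : z \in C by apply: (subsetP sC); rewrite !inE eqxx ?orbT.
  by move: zC; rewrite (QinF4 CF C4 xC) !inE !D.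
have F1 : [set x; a] \in F by apply: (inF (B := [set a])); rewrite /L12 !inE eqxx ?orbT.
have F2 : (x |: [set a; b]) \in F by apply: (inF (B := [set a; b])); rewrite /L12 !inE eqxx ?orbT.
have F3 : (x |: [set a; c]) \in F by apply: (inF (B := [set a; c])); rewrite /L12 !inE eqxx ?orbT.
have F4 : (x |: [set a; z]) \in F by apply: (inF (B := [set a; z])); rewrite /L12 !inE eqxx ?orbT.
have F5 := QF.
have dxa : 4 < degS F [set x; a].
  rewrite /degS; apply: (@leq_trans #|[set [set x; a]; (x |: [set a; b]); (x |: [set a; c]); (x |: [set a; z]); [set x; a; b; c]]|).
    by rewrite -!setUA !cardsU1 cards1; sa D.
  apply/subset_leq_card; rewrite !subUset !sub1set !inE F1 F2 F3 F4 F5 /=; sa D.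
have dxz : degS F [set x; z] <= 4.
  rewrite /degS; apply: (@leq_trans #|[set [set x; z]; (x |: [set a; z]); (x |: [set b; z]); (x |: [set c; z])]|); last first.
    by rewrite -!setUA !cardsU1 cards1; sa D.
  apply/subset_leq_card/subsetP => B; rewrite inE => /andP [FB sB].
  have xB : x \in B by apply: (subsetP sB); rewrite !inE eqxx.
  have zB : z \in B by apply: (subsetP sB); rewrite !inE eqxx ?orbT.
  have HB : B :\ x \in L12 a b c z by rewrite -HL linkP setD11 setD1K.
  have EB : B = x |: (B :\ x) by rewrite setD1K.
  rewrite EB in zB *.
  move: (B :\ x) HB zB => B' H zB.
  move: H; rewrite /L12 !inE -?orbA => H.
  do 11 (case/orP: H => [/eqP E|H]; first by move: zB; rewrite E; sa D).
  by move/eqP: H zB => ->; sa D.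
have NBe : forall e : {set T}, ((e \subset (x |: [set a; z])) && (#|e| == 2) && (4 < degS F e)) =
   (e == [set x; a]) || ((e == [set a; z]) && (4 < degS F [set a; z])).
  move=> e; apply/idP/idP.
  - move=> /andP [/andP [se /eqP e2] de]; rewrite setUA in se; rewrite (sub3_enum se) in e2 de *.
    move: e2 de; case: (x \in e); case: (a \in e); case: (z \in e);
      rewrite ?set0U ?setU0 -?setUA ?cardsU1 ?cards1 ?cards0 ?inE ?D /= ?eqxx; try done.
    + by move=> _; rewrite ltnNge dxz.
    + by move=> _ ->; rewrite orbT.
  - by case/orP => [/eqP -> | /andP [/eqP -> ->]]; rewrite ?dxa andbT cardsU1 cards1; sa D.
case: (boolP (4 < degS F [set a; z])) => h.
- have -> : n_big F (x |: [set a; z]) = 2.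
    rewrite /n_big (@eq_card _ _ [set [set x; a]; [set a; z]]); first by rewrite cardsU1 cards1; sa D.
    by move=> e; rewrite inE NBe h andbT !inE.
  rewrite /=; case: ifP => // /existsP []; exists [set x; z]; rewrite dxz cardsU1 cards1; sa D.
- have -> : n_big F (x |: [set a; z]) = 1.
    rewrite /n_big (@eq_card _ _ [set [set x; a]]); first by rewrite cards1.
    by move=> e; rewrite inE NBe (negbTE h) andbF orbF !inE.
  rewrite /=; case: ifP => // /existsP []; exists [set x; a]; rewrite dxa cardsU1 cards1; sa D.
Qed.

Lemma not_mini : ~~ mini_weight F a.
Proof.
rewrite /mini_weight; apply/negP => /and3P [_ /eqP f2 /eqP f3].
have F4 : x |: [set a; z] \in F by apply: (inF (B := [set a; z])); rewrite /L12 !inE eqxx ?orbT.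
have Xl : [set x; b; c] \in link F a.
  rewrite linkP; apply/andP; split; [sa D | apply: (Hher QF); sa D].
have X3 : #|[set x; b; c]| = 3 by rewrite -setUA !cardsU1 cards1; sa D.
have : #|[set A in link F a | #|A| == 3] :\ [set x; b; c]| = 1.
  have mem : [set x; b; c] \in [set A in link F a | #|A| == 3] by rewrite inE Xl X3 eqxx.
  by move: f3; rewrite /fi (cardsD1 [set x; b; c]) mem add1n => -[].
move/eqP/cards1P => [T0 hT0].
have : T0 \in [set A in link F a | #|A| == 3] :\ [set x; b; c] by rewrite hT0 set11.
rewrite !inE => /andP [T0n /andP [T0l /eqP T03]].
have xT0 : x \notin T0.
  apply/negP => xT; move: (T0l); rewrite linkP => /andP [aT FaT].
  have c4 : #|a |: T0| = 4 by rewrite cardsU1 aT T03.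
  have E := QinF4 FaT c4 (setU1r a xT).
  have E' : T0 = [set x; b; c].
    rewrite -(setU1K aT) E; apply/setP => w; rewrite !inE.
    case: (eqVneq w a) => [->|_]; sa D.
  by rewrite E' eqxx in T0n.
pose Dr := [set e : {set T} | e \subset T0 & (#|e| == 2)].
have cDr : #|Dr| = 3 by rewrite cards_draws T03.
pose Xp := [set [set x; b]; [set x; c]; [set x; z]].
have cXp : #|Xp| = 3 by rewrite /Xp -setUA !cardsU1 cards1; sa D.
have l1 : [set x; b] \in link F a.
  rewrite linkP; apply/andP; split; [sa D | apply: (Hher QF); sa D].
have l2 : [set x; c] \in link F a.
  rewrite linkP; apply/andP; split; [sa D | apply: (Hher QF); sa D].
have l3 : [set x; z] \in link F a.
  rewrite linkP; apply/andP; split; [sa D | apply: (Hher F4); sa D].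
have sub : Dr :|: Xp \subset [set A in link F a | #|A| == 2].
  rewrite subUset; apply/andP; split.
  - apply/subsetP => e; rewrite !inE => /andP [se ->]; rewrite andbT.
    exact: link_her T0l se.
  - by rewrite /Xp !subUset !sub1set !inE l1 l2 l3 !cardsU1 !cards1; sa D.
have dis : Dr :&: Xp = set0.
  apply/setP => e; rewrite !inE; apply/negbTE/negP => /andP [/andP [se _] H].
  have xe : x \in e by move: H; rewrite -?orbA => /or3P [] /eqP ->; rewrite !inE eqxx.
  by rewrite (subsetP se x xe) in xT0.
have := subset_leq_card sub; rewrite cardsU dis cards0 cDr cXp.
by move: f2; rewrite /fi => ->.
Qed.

End Perm.
Section Top.
Variables x y1 y2 y3 z : T.
Hypothesis Hdeg : 12 <= deg F x.
Hypothesis H3 : fi F 3 x = 1.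
Hypothesis HQ : Qx F x = [set [set x; y1; y2; y3]].
Hypothesis HN : nbhd F x = [set x; y1; y2; y3; z].

Lemma QF0 : [set x; y1; y2; y3] \in F /\ #|[set x; y1; y2; y3]| = 4.
Proof.
have : [set x; y1; y2; y3] \in Qx F x by rewrite HQ set11.
by rewrite !inE => /andP [/andP [QF /eqP c4] _].
Qed.

Lemma u4 : uniq [:: x; y1; y2; y3].
Proof.
have [_ c4] := QF0; move: c4; rewrite -!setUA !cardsU1 cards1 /= !inE.
by case: (x == y1); case: (x == y2); case: (x == y3); case: (y1 == y2); case: (y1 == y3); case: (y2 == y3).
Qed.

Lemma link_nb B w : B \in link F x -> w \in B -> (w \in [set x; y1; y2; y3; z]) && (w != x).
Proof.
rewrite linkP => /andP [xB FB] wB.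
rewrite -HN (in_nbhd FB (setU11 _ _) (setU1r _ wB)) /=.
by apply/negP => /eqP E; rewrite -E wB in xB.
Qed.

Lemma zQ : z \notin [set x; y1; y2; y3].
Proof.
apply/negP => zQ.
have sub : link F x \subset powerset [set y1; y2; y3].
  apply/subsetP => B BL; rewrite powersetE; apply/subsetP => w wB.
  have /andP [wN wx] := link_nb BL wB.
  move: wN zQ; rewrite !inE (negbTE wx) /= -?orbA => /or4P [] /eqP E; subst w; rewrite ?eqxx ?orbT //.
  by rewrite (negbTE wx).
have := subset_leq_card sub; rewrite card_powerset.
have : #|[set y1; y2; y3]| = 3.
  move: u4; rewrite -setUA !cardsU1 cards1 /= !inE.
  by case: (x == y1); case: (x == y2); case: (x == y3); case: (y1 == y2); case: (y1 == y3); case: (y2 == y3).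
move=> ->; move: Hdeg; rewrite /deg.
by move=> h1 h2; have := leq_trans h1 h2.
Qed.

Lemma u5 : uniq [:: x; y1; y2; y3; z].
Proof.
have := zQ; have := u4; rewrite /= !inE ?(eq_sym z).
case: (x == y1); case: (x == y2); case: (x == y3); case: (y1 == y2); case: (y1 == y3); case: (y2 == y3); 
  case: (x == z); case: (y1 == z); case: (y2 == z); case: (y3 == z); by [].
Qed.

Let D := Dfacts u5.

Lemma Y3in : [set y1; y2; y3] \in link F x.
Proof.
have [QF _] := QF0.
by rewrite linkP; apply/andP; split; [sa D | move: QF; rewrite !setUA].
Qed.

Lemma tri C : C \in link F x -> #|C| = 3 -> C = [set y1; y2; y3].
Proof.
move=> CL C3; apply: (card1_eq H3); rewrite inE ?CL ?C3 ?Y3in //.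
by rewrite -setUA !cardsU1 cards1; sa D.
Qed.

Lemma bad (p q : T) : p \in [set y1; y2; y3] -> q \in [set y1; y2; y3] -> p != q ->
   forall B, B \in link F x -> p \in B -> q \in B -> z \in B -> False.
Proof.
move=> pY qY pq B BL pB qB zB.
have CL : [set p; q; z] \in link F x by apply: link_her BL _; rewrite !subUset !sub1set pB qB zB.
have pz : p != z by apply/negP => /eqP E; move: pY; rewrite E; sa D.
have qz : q != z by apply/negP => /eqP E; move: qY; rewrite E; sa D.
have := tri CL; rewrite -setUA !cardsU1 cards1 !inE (negbTE pq) (negbTE pz) (negbTE qz) => /(_ erefl) E.
have zz : z \in p |: [set q; z] by rewrite !inE eqxx ?orbT.
by move: zz; rewrite E; sa D.
Qed.

Lemma linkE : link F x = L12 y1 y2 y3 z.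
Proof.
have sub : link F x \subset L12 y1 y2 y3 z.
  apply/subsetP => B BL.
  have sB : B \subset [set y1; y2; y3; z].
    apply/subsetP => w wB; have /andP [wN wx] := link_nb BL wB.
    by move: wN; rewrite !inE (negbTE wx).
  have b12 := @bad y1 y2 ltac:(sa D) ltac:(sa D) ltac:(sa D) B BL.
  have b13 := @bad y1 y3 ltac:(sa D) ltac:(sa D) ltac:(sa D) B BL.
  have b23 := @bad y2 y3 ltac:(sa D) ltac:(sa D) ltac:(sa D) B BL.
  rewrite (sub4_enum sB).
  move: b12 b13 b23.
  case: (y1 \in B); case: (y2 \in B); case: (y3 \in B); case: (z \in B); move=> h1 h2 h3;
   first [ by exfalso; apply: h1; sa D | by exfalso; apply: h2; sa D | by exfalso; apply: h3; sa D
         | rewrite /L12; sa D ].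
apply/eqP; rewrite eqEcard sub /=.
apply: leq_trans Hdeg; rewrite /L12 -!setUA !cardsU1 cards1; sa D.
Qed.

Lemma L12_RHS : L12 y1 y2 y3 z = powerset [set y1; y2; y3] :|: [set [set z]]
                 :|: [set [set y1; z]; [set y2; z]; [set y3; z]].
Proof.
apply/setP => B; rewrite /L12 !inE ?powersetE; apply/idP/idP.
- move=> H; rewrite -?orbA in H.
  do 11 (case/orP: H => [/eqP -> | H]; first by sa D).
  by move/eqP: H => ->; sa D.
- rewrite -?orbA => /orP [sB | H].
  + rewrite (sub3_enum sB); case: (y1 \in B); case: (y2 \in B); case: (y3 \in B); sa D.
  + do 3 (case/orP: H => [/eqP -> | H]; first by sa D).
    by move/eqP: H => ->; sa D.
Qed.

Lemma Fyz y : y \in [set y1; y2; y3] -> x |: [set y; z] \in F.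
Proof.
move=> Hy; have : [set y; z] \in link F x.
  by rewrite linkE /L12; move: Hy; rewrite !inE -?orbA => /or3P [] /eqP ->; sa D.
by rewrite linkP => /andP [_ ->].
Qed.

Lemma nbz : nbhd F x \subset nbhd F z.
Proof.
rewrite HN; apply/subsetP => w H; rewrite !inE -?orbA in H.
have F1 : x |: [set y1; z] \in F by apply: Fyz; sa D.
have F2 : x |: [set y2; z] \in F by apply: Fyz; sa D.
have F3 : x |: [set y3; z] \in F by apply: Fyz; sa D.
do 4 (case/orP: H => [/eqP -> | H];
  first by [apply: (in_nbhd F1); sa D | apply: (in_nbhd F2); sa D | apply: (in_nbhd F3); sa D]).
by move/eqP: H => ->; apply: (in_nbhd F1); sa D.
Qed.

Lemma nby y : y \in [set y1; y2; y3] -> nbhd F x \subset nbhd F y.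
Proof.
have [QF _] := QF0.
move=> Hy; have FY := Fyz Hy; move: FY; move: Hy; rewrite !inE -?orbA => /or3P [] /eqP -> FY;
rewrite HN; apply/subsetP => w; rewrite !inE -?orbA => H;
do 4 (case/orP: H => [/eqP -> | H]; first by apply: (in_nbhd QF); sa D);
by move/eqP: H => ->; apply: (in_nbhd FY); sa D.
Qed.

Lemma Hu2 : uniq [:: x; y2; y1; y3; z].
Proof. by rewrite /= !inE ?D. Qed.
Lemma Hu3 : uniq [:: x; y3; y1; y2; z].
Proof. by rewrite /= !inE ?D. Qed.
Lemma HQ2 : Qx F x = [set [set x; y2; y1; y3]].
Proof.
rewrite HQ; congr [set _]; apply/setP => w; rewrite !inE.
by case: (w == x); case: (w == y1); case: (w == y2); case: (w == y3).
Qed.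
Lemma HQ3 : Qx F x = [set [set x; y3; y1; y2]].
Proof.
rewrite HQ; congr [set _]; apply/setP => w; rewrite !inE.
by case: (w == x); case: (w == y1); case: (w == y2); case: (w == y3).
Qed.
Lemma HL2 : link F x = L12 y2 y1 y3 z.
Proof.
rewrite linkE /L12 (setUC [set y2] [set y1]).
apply/setP => B; rewrite /L12 !inE;
apply/idP/idP => H; rewrite -?orbA in H *;
do 11 (case/orP: H => [/eqP -> | H]; first by rewrite eqxx ?orbT);
by move/eqP: H => ->; rewrite eqxx ?orbT.
Qed.
Lemma HL3 : link F x = L12 y3 y1 y2 z.
Proof.
rewrite linkE /L12 (setUC [set y3] [set y1]) (setUC [set y3] [set y2]) (setUAC [set y1] [set y3] [set y2]).
apply/setP => B; rewrite /L12 !inE;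
apply/idP/idP => H; rewrite -?orbA in H *;
do 11 (case/orP: H => [/eqP -> | H]; first by rewrite eqxx ?orbT);
by move/eqP: H => ->; rewrite eqxx ?orbT.
Qed.

Lemma cQ0 : cQ F [set x; y1; y2; y3] = 0.
Proof.
rewrite /cQ; apply/eqP; rewrite cards_eq0; apply/eqP/setP => v; rewrite !inE.
case: (boolP (mini_weight F v)) => m; rewrite ?andbF // andbT.
apply/negP; rewrite -?orbA => /or4P [] /eqP E; subst v.
- by move: m; rewrite /mini_weight H3 => /and3P [].
- by rewrite (negbTE (not_mini u5 HQ linkE)) in m.
- by rewrite (negbTE (not_mini Hu2 HQ2 HL2)) in m.
- by rewrite (negbTE (not_mini Hu3 HQ3 HL3)) in m.
Qed.

Local Open Scope ring_scope.

Lemma omega_n3 (A : {set T}) : #|A| != 3%N -> omega F x A = (#|A|%:R)^-1.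
Proof. by rewrite /omega => ->. Qed.

Lemma omega_inQ (A : {set T}) : A \subset [set x; y1; y2; y3] -> #|A| = 3%N -> omega F x A = 1/3.
Proof.
move=> sA cA; rewrite /omega cA /=.
have [QF c4] := QF0.
have -> : [exists B in F, (A \subset B) && (#|B| == 4%N)] = true.
  by apply/existsP; exists [set x; y1; y2; y3]; rewrite QF sA c4 eqxx.
by [].
Qed.

Lemma weightE : weight F x = 53 / 10.
Proof.
rewrite /weight.
have -> : \sum_(A in F | x \in A) omega F x A = \sum_(B in link F x) omega F x (x |: B).
  rewrite /link big_imset /=; last first.
    move=> A1 A2; rewrite !inE => /andP [_ x1] /andP [_ x2] E.
    by rewrite -(setD1K x1) E setD1K.
  apply: eq_big => [A|A]; first by rewrite inE.
  by move=> /andP [_ xA]; rewrite setD1K.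
have o0 : omega F x (x |: set0) = 1.
  have c : #|x |: set0| = 1%N by rewrite setU0 cards1.
  by rewrite omega_n3 c // invr1.
have o1 : forall w, w != x -> omega F x (x |: [set w]) = 2%:R^-1.
  move=> w wx; have c : #|x |: [set w]| = 2%N by rewrite cardsU1 cards1 inE eq_sym (negbTE wx).
  by rewrite omega_n3 c.
have o12 : omega F x (x |: [set y1; y2]) = 1/3 by apply: omega_inQ; [sa D | rewrite !cardsU1 cards1; sa D].
have o13 : omega F x (x |: [set y1; y3]) = 1/3 by apply: omega_inQ; [sa D | rewrite !cardsU1 cards1; sa D].
have o23 : omega F x (x |: [set y2; y3]) = 1/3 by apply: omega_inQ; [sa D | rewrite !cardsU1 cards1; sa D].
have o4 : omega F x (x |: (y1 |: [set y2; y3])) = 4%:R^-1.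
  have c : #|x |: (y1 |: [set y2; y3])| = 4%N by rewrite !cardsU1 cards1; sa D.
  by rewrite omega_n3 c.
have oz1 := omega_xaz u5 HQ linkE.
have oz2 := omega_xaz Hu2 HQ2 HL2.
have oz3 := omega_xaz Hu3 HQ3 HL3.
rewrite linkE /L12 -!setUA !big_setU1 ?big_set1 /=; try by sa D.
rewrite o0 o12 o13 o23 o4 oz1 oz2 oz3 !o1; try by sa D.
Qed.

End Top.

Lemma main_all (x y1 y2 y3 z : T) : (12 <= deg F x)%N ->
  fi F 3 x = 1%N -> Qx F x = [set [set x; y1; y2; y3]] ->
  nbhd F x = [set x; y1; y2; y3; z] ->
  [/\ link F x = powerset [set y1; y2; y3] :|: [set [set z]]
                 :|: [set [set y1; z]; [set y2; z]; [set y3; z]],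
      nbhd F x \subset nbhd F z,
      (forall y, y \in [set y1; y2; y3] -> nbhd F x \subset nbhd F y),
      cQ F [set x; y1; y2; y3] = 0%N &
      weight F x = (53 / 10)%R].
Proof.
move=> Hd H3 HQ HN; split.
- by rewrite (linkE Hd H3 HQ HN) (L12_RHS Hd HQ HN).
- exact: (nbz Hd H3 HQ HN).
- exact: (nby Hd H3 HQ HN).
- exact: (cQ0 Hd H3 HQ HN).
- exact: (weightE Hd H3 HQ HN).
Qed.

End Main.

Unset Implicit Arguments.
Theorem mainTheorem10 (T : finType) (F : {set {set T}}) (x y1 y2 y3 z : T) :
  minimal12 F ->
  fi F 3 x = 1%N -> fi F 1 x = 4%N ->
  Qx F x = [set [set x; y1; y2; y3]] ->
  nbhd F x = [set x; y1; y2; y3; z] ->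
  [/\ link F x = powerset [set y1; y2; y3] :|: [set [set z]]
                 :|: [set [set y1; z]; [set y2; z]; [set y3; z]],
      nbhd F x \subset nbhd F z,
      (forall y, y \in [set y1; y2; y3] -> nbhd F x \subset nbhd F y),
      cQ F [set x; y1; y2; y3] = 0%N &
      weight F x = (53 / 10)%R].
Proof.
move=> [Hh Hm _] H3 _ HQ HN.
exact: (main_all Hh (Hm x) H3 HQ HN).
Qed.
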